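(* Let $mG$ be a finite canonical misinformation game, $\Gamma=(\mathcal{AD}^*(\{mG\}),E)$ its adaptation graph, and $\Gamma'$ the graph obtained from $\Gamma$ by omitting self-loops. Let $mG'$ be the last node on a maximal path in $\Gamma'$ starting from $mG$. Then every natural misinformed equilibrium of $mG'$ is a stable misinformed equilibrium of $mG$.
   Context: A normal-form game is $G=\langle N,S,P\rangle$ with finite players $N$, finite pure strategy sets $S_i$, positions $S=\times_i S_i$, payoffs $P_i:S\to\mathbb{R}$. A misinformation game $mG=\langle G^0,G^1,\dots,G^{|N|}\rangle$ consists of the actual game $G^0$ and subjective games $G^i$; it is canonical if all $G^i=\langle N,S,P^i\rangle$ differ from $G^0$ only in payoffs and in every $G^i$ all players have equally many pure strategies. $NME(mG)$ (natural misinformed equilibria) is the set of profiles $\sigma=(\sigma_1,\dots,\sigma_{|N|})$ such that each $\sigma_i$ is player $i$'s component of some Nash equilibrium of $G^i$. $\chi(\sigma)=\mathrm{supp}(\sigma_1)\times\dots\times\mathrm{supp}(\sigma_{|N|})$. For $\vec v\in S$, $mG_{\vec v}$ is obtained by replacing, in every $P^i$ ($i\ge1$), the payoff vector at position $\vec v$ by $P^0(\vec v)$. For a set $M$ of misinformation games, $\mathcal{AD}(M)=\{mG_{\vec u}: mG\in M,\sigma\in NME(mG),\vec u\in\chi(\sigma)\}$, $\mathcal{AD}^{(0)}(M)=M$, $\mathcal{AD}^{(t+1)}(M)=\mathcal{AD}^{(t)}(\mathcal{AD}(M))$, $\mathcal{AD}^*(M)=\bigcup_{t\ge0}\mathcal{AD}^{(t)}(M)$;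 the length $\mathfrak{L}$ is the least $t\ge0$ with $\mathcal{AD}^{(t+1)}(M)=\mathcal{AD}^{(t)}(M)$ and $\mathcal{AD}^\infty(M)=\mathcal{AD}^{(\mathfrak{L})}(M)$. A profile $\sigma$ is a stable misinformed equilibrium of $mG$ if there is $\widehat{mG}\in\mathcal{AD}^\infty(\{mG\})$ with $\sigma\in NME(\widehat{mG})$ and $\widehat{mG}_{\vec v}=\widehat{mG}$ for all $\vec v\in\chi(\sigma)$. The adaptation graph $\Gamma$ has vertex set $\mathcal{AD}^*(\{mG\})$ and an edge $(mG^1,mG^2)$ iff $mG^2=(mG^1)_{\vec v}$ for some $\sigma\in NME(mG^1)$, $\vec v\in\chi(\sigma)$. A maximal path is a directed path that cannot be extended. *)

(* Defs.v *)
From HB Require Import structures.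
From mathcomp Require Import all_boot all_order all_algebra.
Set Implicit Arguments. Unset Strict Implicit. Unset Printing Implicit Defensive.
Import Order.TTheory GRing.Theory Num.Theory.
Local Open Scope ring_scope.

(* All games of a
   canonical misinformation game share the players and the strategy sets, so
   these are parameters; only the payoffs vary. *)
Section MisinfGames.
Variables (R : realFieldType) (n : nat) (m : 'I_n -> nat).

Definition position := {dffun forall i : 'I_n, 'I_(m i)}.

Definition payoff := position -> 'I_n -> R.

Record mgame := MGame {
  actual : payoff;
  subj : 'I_n -> payoff       (* subj i = P^{i} (player i's subjective game) *)
}.

Definition mixed (i : 'I_n) (x : 'I_(m i) -> R) : Prop :=
  (forall a, 0 <= x a) /\ \sum_(a < m i) x a = 1.

Definition profile := forall i : 'I_n, 'I_(m i) -> R.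

Definition expected (P : payoff) (sigma : profile) (j : 'I_n) : R :=
  \sum_(s : position) (\prod_(i < n) sigma i (s i)) * P s j.

Definition nash (P : payoff) (sigma : profile) : Prop :=
  (forall i, mixed (sigma i)) /\
  forall (j : 'I_n) (tau : 'I_(m j) -> R), mixed tau ->
    expected P (dfwith sigma tau) j <= expected P sigma j.

Definition NME (mG : mgame) (sigma : profile) : Prop :=
  forall i : 'I_n, exists tau : profile, nash (subj mG i) tau /\ tau i = sigma i.

Definition chi (sigma : profile) (v : position) : Prop :=
  forall i : 'I_n, 0 < sigma i (v i).

Definition adapt (mG : mgame) (v : position) : mgame :=
  MGame (actual mG) (fun i s => if s == v then actual mG v else subj mG i s).

Definition mset := mgame -> Prop.
Definition mset_eq (M1 M2 : mset) : Prop := forall g, M1 g <-> M2 g.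

Definition adapt_edge (g1 g2 : mgame) : Prop :=
  exists (sigma : profile) (v : position), NME g1 sigma /\ chi sigma v /\ g2 = adapt g1 v.

Definition AD (M : mset) : mset := fun g => exists g0, M g0 /\ adapt_edge g0 g.

Fixpoint ADiter (t : nat) (M : mset) : mset :=
  match t with 0 => M | t'.+1 => ADiter t' (AD M) end.

Definition ADstar (M : mset) : mset := fun g => exists t, ADiter t M g.

Definition is_length (M : mset) (t : nat) : Prop :=
  mset_eq (ADiter t.+1 M) (ADiter t M) /\
  forall t', (t' < t)%N -> ~ mset_eq (ADiter t'.+1 M) (ADiter t' M).

Definition ADinf (M : mset) : mset :=
  fun g => exists L, is_length M L /\ ADiter L M g.

Definition stable_ME (mG : mgame) (sigma : profile) : Prop :=
  exists g, ADinf (fun h => h = mG) g /\ NME g sigma /\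
            forall v, chi sigma v -> adapt g v = g.

(* edges of Gamma' (Gamma without self-loops); vertices of Gamma are
   ADstar {mG}, which is closed under adapt_edge *)
Definition edge' (g1 g2 : mgame) : Prop := adapt_edge g1 g2 /\ g1 <> g2.

Definition maximal_path_from (mG : mgame) (p : nat -> mgame) (k : nat) : Prop :=
  p 0%N = mG /\
  (forall i, (i < k)%N -> edge' (p i) (p i.+1)) /\
  (forall i j, (i <= k)%N -> (j <= k)%N -> p i = p j -> i = j) /\
  (forall g, ADstar (fun h => h = mG) g -> edge' (p k) g ->
     exists2 i, (i <= k)%N & g = p i).

End MisinfGames.

(* Main.v *)
Require Import Defs.
From HB Require Import structures.
From mathcomp Require Import all_boot all_order all_algebra.
From Stdlib Require Import FunctionalExtensionality Classical ClassicalEpsilon Lia.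
From mathcomp Require Import zify.
Set Implicit Arguments. Unset Strict Implicit. Unset Printing Implicit Defensive.
Import Order.TTheory GRing.Theory Num.Theory.
Local Open Scope ring_scope.

Definition corr {R : realFieldType} {n} {m : 'I_n -> nat} (g : mgame R m) (s : position m) : bool :=
  [forall j, forall k, subj g j s k == actual g s k].
Definition badset {R : realFieldType} {n} {m : 'I_n -> nat} (g : mgame R m) : {set position m} :=
  [set s | ~~ corr g s].
Definition bad {R : realFieldType} {n} {m : 'I_n -> nat} (g : mgame R m) : nat := #|badset g|.

Lemma corr_adapt {R : realFieldType} {n} {m : 'I_n -> nat} (g : mgame R m) v s :
  corr g s -> corr (adapt g v) s.
Proof.
move=> /forallP H; apply/forallP => j; apply/forallP => k /=.
case: (s =P v) => [E|_] //=; [by rewrite -E|]; exact: (forallP (H j) k).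
Qed.

Lemma corr_adapt_v {R : realFieldType} {n} {m : 'I_n -> nat} (g : mgame R m) v :
  corr (adapt g v) v.
Proof. by apply/forallP => j; apply/forallP => k /=; rewrite eqxx. Qed.

Lemma adapt_id {R : realFieldType} {n} {m : 'I_n -> nat} (g : mgame R m) v :
  corr g v -> adapt g v = g.
Proof.
move=> /forallP H; case: g H => a s H /=; congr MGame.
apply: functional_extensionality => j; apply: functional_extensionality => x.
case: eqP => [->|//]; apply: functional_extensionality => k; by have /= := eqP (forallP (H j) k).
Qed.

Lemma edge_corr {R : realFieldType} {n} {m : 'I_n -> nat} (g h : mgame R m) s :
  adapt_edge g h -> corr g s -> corr h s.
Proof. by move=> [sg [v [_ [_ ->]]]]; apply: corr_adapt. Qed.

Lemma edge_bad {R : realFieldType} {n} {m : 'I_n -> nat} (g h : mgame R m) :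
  adapt_edge g h -> g <> h -> (bad h < bad g)%N.
Proof.
move=> [sg [v [_ [_ ->]]]] Hne; apply: proper_card; apply/properP; split.
  apply/subsetP => s; rewrite !inE; apply: contra; exact: corr_adapt.
exists v; rewrite !inE ?corr_adapt_v //.
by apply/negP => /adapt_id E; apply: Hne.
Qed.

Lemma walkP {R : realFieldType} {n} {m : 'I_n -> nat} t (M : mset R m) g :
  ADiter t M g <-> exists w : nat -> mgame R m, M (w 0%N) /\
     (forall i, (i < t)%N -> adapt_edge (w i) (w i.+1)) /\ w t = g.
Proof.
elim: t M g => [|t IH] M g /=.
  split; first by move=> H; exists (fun _ => g).
  by move=> [w [H [_ <-]]].
rewrite IH; split.
  move=> [w [[g0 [Mg0 E0]] [Hw <-]]].
  exists (fun i => if i is i'.+1 then w i' else g0); split => //; split => //.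
  by case=> [|i] Hi //=; apply: Hw.
move=> [w [M0 [Hw <-]]]; exists (fun i => w i.+1); split; last split => //.
  by exists (w 0%N); split => //; apply: Hw.
by move=> i Hi; apply: Hw.
Qed.

Lemma walk_loop {R : realFieldType} {n} {m : 'I_n -> nat} (w : nat -> mgame R m) t :
  (forall i, (i < t)%N -> adapt_edge (w i) (w i.+1)) -> (bad (w 0%N) < t)%N ->
  exists2 i, (i < t)%N & w i = w i.+1.
Proof.
move=> Hw Ht; apply: NNPP => Hn.
have H : forall i, (i <= t)%N -> (bad (w i) + i <= bad (w 0%N))%N.
  elim=> [|i IH] Hi; first by rewrite addn0.
  have Hit : (i < t)%N by [].
  have := edge_bad (Hw i Hit) (fun E => Hn (ex_intro2 _ _ i Hit E)).
  have := IH (ltnW Hi). lia.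
have := H t (leqnn t). lia.
Qed.

Lemma stab {R : realFieldType} {n} {m : 'I_n -> nat} (mG : mgame R m) t :
  (bad mG < t)%N -> mset_eq (ADiter t.+1 (fun h => h = mG)) (ADiter t (fun h => h = mG)).
Proof.
move=> Ht g; rewrite !walkP; split.
  move=> [w [W0 [Hw Wt]]].
  have [i Hi Ei] : exists2 i, (i < t.+1)%N & w i = w i.+1.
    by apply: walk_loop => //; rewrite W0; apply: ltnW.
  exists (fun j => if (j <= i)%N then w j else w j.+1); split => //; split.
    move=> j Hj /=.
    case: (ltngtP j i) => Hji.
    - apply: Hw; lia.
    - apply: Hw; lia.
    - subst; rewrite Ei; apply: Hw; lia.
  case: ifP => Hti //; have E : t = i by lia. by rewrite E Ei -E.
move=> [w [W0 [Hw Wt]]].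
have [i Hi Ei] : exists2 i, (i < t)%N & w i = w i.+1.
  by apply: walk_loop => //; rewrite W0.
exists (fun j => if (j <= i)%N then w j else w j.-1); split => //; split.
  move=> j Hj /=.
  case: (ltngtP j i) => Hji.
  - apply: Hw; lia.
  - have E : j = j.-1.+1 by lia.
    rewrite {2}E; apply: Hw; lia.
  - subst; rewrite {2}Ei; apply: Hw; lia.
rewrite ifF //; lia.
Qed.

Lemma ADiter_S {R : realFieldType} {n} {m : 'I_n -> nat} t (M : mset R m) :
  ADiter t.+1 M = AD (ADiter t M).
Proof. by elim: t M => [|t IH] M //=; rewrite -IH. Qed.

Lemma AD_eq {R : realFieldType} {n} {m : 'I_n -> nat} (M1 M2 : mset R m) :
  mset_eq M1 M2 -> mset_eq (AD M1) (AD M2).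
Proof.
move=> E g; split => -[g0 [H1 H2]]; exists g0; split => //; by apply/E.
Qed.

Lemma propag {R : realFieldType} {n} {m : 'I_n -> nat} L (M : mset R m) :
  mset_eq (ADiter L.+1 M) (ADiter L M) -> forall j, mset_eq (ADiter (L + j) M) (ADiter L M).
Proof.
move=> E; elim=> [|j IH]; first by rewrite addn0.
rewrite addnS ADiter_S => g.
rewrite (AD_eq IH g) -ADiter_S; exact: E.
Qed.

Lemma min_exists (P : nat -> Prop) t : P t -> exists L, P L /\ forall t', (t' < L)%N -> ~ P t'.
Proof.
elim/ltn_ind: t => t IH Pt.
case: (classic (exists t', (t' < t)%N /\ P t')) => [[t' [Ht' Pt']]|Hn].
  exact: IH Ht' Pt'.
exists t; split => // t' Ht' Pt'; apply: Hn; by exists t'.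
Qed.

Lemma pos_exists {R : realFieldType} k (x : 'I_k -> R) :
  (forall a, 0 <= x a) -> \sum_(a < k) x a = 1 -> exists a, 0 < x a.
Proof.
move=> H0 H1; apply: NNPP => Hn.
have Z : forall a, x a = 0.
  move=> a; apply/eqP; rewrite eq_le H0 andbT leNgt; apply/negP => Ha; apply: Hn; by exists a.
move: H1; rewrite big1 //; move=> /eqP; by rewrite eq_sym oner_eq0.
Qed.

Theorem corollary3 (R : realFieldType) (n : nat) (m : 'I_n -> nat)
    (Hequal : forall i j : 'I_n, m i = m j)
    (mG : mgame R m) (p : nat -> mgame R m) (k : nat) :
  maximal_path_from mG p k ->
  forall sigma : profile R m, NME (p k) sigma -> stable_ME mG sigma.
Proof.
move=> [P0 [Pe [Pinj Pmax]]] sigma Hs.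
set M : mset R m := fun h => h = mG.
have Hstab : forall v, chi sigma v -> adapt (p k) v = p k.
  move=> v Hv; apply: NNPP => Hne.
  have Hedge : adapt_edge (p k) (adapt (p k) v) by exists sigma, v.
  have Hstar : ADstar M (adapt (p k) v).
    exists k.+1; apply/walkP.
    exists (fun j => if (j <= k)%N then p j else adapt (p k) v); split => /=; first by [].
    split; last by rewrite ltnn.
    move=> j Hj; case: (ltngtP j k) => Hjk.
    - exact: (Pe j Hjk).1.
    - lia.
    - subst; rewrite ?leqnn ?ltnn //=.
  have [i Hi Ei] := Pmax _ Hstar (conj Hedge (fun E => Hne (esym E))).
  case: (ltngtP i k) => Hik; last by apply: Hne; rewrite Ei Hik.
    2: lia.
  have [[sg [w [_ [_ Ew]]]] Hne2] := Pe i Hik.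
  have Hnc : ~~ corr (p i) w.
    apply/negP => C; apply: Hne2; by rewrite Ew adapt_id.
  have C1 : corr (p i.+1) w by rewrite Ew; apply: corr_adapt_v.
  have Cd : forall d, (i.+1 + d <= k)%N -> corr (p (i.+1 + d)%N) w.
    elim=> [|d IH] Hd; first by rewrite addn0.
    rewrite addnS; apply: edge_corr (Pe _ _).1 (IH _); lia.
  have Ck : corr (p k) w by have := Cd (k - i.+1)%N; rewrite subnKC //; apply.
  move: Hnc; rewrite -Ei; move/negP; apply; exact: corr_adapt.
have Hex : forall i, exists a, 0 < sigma i a.
  move=> i; have [tau [[Hm _] Ti]] := Hs i.
  have [H0 H1] := Hm i; rewrite Ti in H0 H1; exact: pos_exists H0 H1.
pose v : position m := finfun (fun i => proj1_sig (constructive_indefinite_description _ (Hex i))).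
have Hv : chi sigma v.
  move=> i; rewrite /v ffunE; exact: (proj2_sig (constructive_indefinite_description _ (Hex i))).
have Hloop : adapt_edge (p k) (p k) by exists sigma, v; rewrite Hstab.
have Hpad : forall t, (k <= t)%N -> ADiter t M (p k).
  move=> t Ht; apply/walkP; exists (fun j => p (minn j k)); split.
    by rewrite /M min0n.
  split; last by rewrite (minn_idPr Ht).
  move=> j Hj; case: (ltnP j k) => Hjk.
    rewrite (minn_idPl Hjk); exact: (Pe j Hjk).1.
  by rewrite ?(minn_idPr Hjk) (minn_idPr (leqW Hjk)).
have [L [HL HLmin]] := @min_exists (fun t => mset_eq (ADiter t.+1 M) (ADiter t M)) _ (@stab _ _ _ mG (bad mG).+1 (ltnSn _)).
exists (p k); split; last split => //.
exists L; split; first by split.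
apply/(propag HL k); apply: Hpad; lia.
Qed.
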